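(* Let $w'\in\mathcal{W}^e_n$ and let $(O',E')\to(O,E)$ be one application of the step $(\omega)$ during the computation of $\Omega(w')$, using the notation $o'_1|\cdots|o'_h$, $e'_1|\cdots|e'_k$, and (in cases (P'), (F')) $e'_1=r_js_j\cdots s_1$ from the definition of $(\omega)$. Let $O=o_1|\cdots|o_m$ be the Lyndon factorization of $O$, with conventions $o_i=o'_i=\infty$ for $i\le0$. Then: (i) All the Lyndon factors of $E$ are even. (ii) The Lyndon factors of $O$ are odd and pairwise distinct, and the Lyndon factorization of $O$ is $o'_1|\cdots|o'_{h-1}|o'_he'_1$ after a step of type (S'), $o'_1|\cdots|o'_{h-1}|r_js_jo'_h$ after a step of type (P'), and $o'_1|\cdots|o'_h|s_j|r_j$ after a step of type (F'). (iii) $E<o_{m-1}$. (iv) If $|o_m|\ge2$ and its standard factorization is $o_m=rs$, then the leftmost Lyndon factor $e_1$ of $E$ satisfies $e_1\le s$. (v) After a step of type (S'), the standard factorization of $o_m$ is $o_m=o'_h\cdot e'_1$. (vi) After a step of type (P'), the standard factorization of $o_m$ is $o_m=(r_js_j)\cdot o'_h$.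
   Context: Fix a finite totally ordered alphabet $A$. Words are finite sequences over $A$; $-$ is the empty word. $<$ is lexicographic order (a proper prefix is smaller than the word); $\infty$ is a formal symbol with $w<\infty$ for all words $w$. A Lyndon word is a nonempty word strictly smaller than each of its proper nonempty suffixes. Every word has a unique Lyndon factorization $w=\ell_1\cdots\ell_m$ into Lyndon words with $\ell_1\ge\dots\ge\ell_m$, written $\ell_1|\cdots|\ell_m$; the $\ell_i$ are its Lyndon factors. Odd/even refer to lengths. For a Lyndon word $\ell$ with $|\ell|\ge2$, its standard factorization is $\ell=rs$ with $s$ the longest proper suffix of $\ell$ that is Lyndon (equivalently the smallest proper nonempty suffix). $\mathcal{W}^e_n$: words of length $n$ whose Lyndon factors are all even except possibly one factor of length one. Iterated standard factorization (ISF) of a Lyndon word $\ell$, $|\ell|\ge2$, with respect to $u$ (a word or $\infty$): the unique factorization $\ell=r_js_js_{j-1}\cdots s_1$, $j\ge1$, such that (a) for every $i\in[j]$, $s_i$ is the smallest proper nonempty suffix of $r_js_j\cdots s_i$; (b) for $i\in[j-1]$, $s_i$ is even and $s_i<u$; (c) $s_j$ is odd or $u\le s_j$. Computation of $\Omega(w')$ for $w'\in\mathcal{W}^e_n$: start with $(O',E')=(-,w')$; if $n$ is odd, remove the unique length-one Lyndon factor from $E'$ (so $E'$ becomes the concatenation of the remaining factors) and set $O'$ equal to that letter. While $E'$ is nonempty, apply step $(\omega)$: let $O'=o'_1|\cdots|o'_h$ and $E'=e'_1|\cdots|e'_k$ (with $o'_h=\infty$ if $O'$ is empty). If $o'_h<e'_1$,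 update to (S') $(O'e'_1,\ e'_2\cdots e'_k)$. Otherwise let $e'_1=r_js_js_{j-1}\cdots s_1$ be the ISF of $e'_1$ with respect to $o'_h$ and update to (P') $(o'_1\cdots o'_{h-1}r_js_jo'_h,\ s_{j-1}\cdots s_1e'_2\cdots e'_k)$ if $o'_h\le s_j$, or to (F') $(O's_jr_j,\ s_{j-1}\cdots s_1e'_2\cdots e'_k)$ if $s_j<o'_h$. When $E'$ is empty, $\Omega(w')=O'$. *)

(* Defs.v *)
From mathcomp Require Import all_boot all_order.
Set Implicit Arguments. Unset Strict Implicit. Unset Printing Implicit Defensive.
Import Order.TTheory.

Section Words.
Context {d : Order.disp_t} {A : finOrderType d}.

Definition word := seq A.

Fixpoint lexlt (u v : word) : bool :=
  match u, v with
  | [::], [::] => false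
  | [::], _ :: _ => true
  | _ :: _, [::] => false
  | a :: u', b :: v' => (a < b)%O || ((a == b) && lexlt u' v')
  end.

Definition lexle (u v : word) : bool := (u == v) || lexlt u v.

(* words extended with infinity: None = infinity, w < infinity for all w *)
Definition ltw (x y : option word) : bool :=
  match x, y with
  | Some u, Some v => lexlt u v
  | Some _, None => true
  | None, _ => false
  end.

Definition lew (x y : option word) : bool := (x == y) || ltw x y.

Definition lyndon (w : word) : bool :=
  (w != [::]) && all (fun i => lexlt w (drop i w)) (iota 1 (size w).-1).

Definition is_lyndon_fact (w : word) (fs : seq word) : Prop :=
  [/\ flatten fs = w, all lyndon fs & sorted (fun x y => lexle y x) fs].

Definition std_fact (l r s : word) : Prop :=
  [/\ r != [::], l = r ++ s, lyndon s &
      forall i, 0 < i < size l -> lyndon (drop i l) -> size (drop i l) <= size s].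

Definition smallest_proper_suffix (s t : word) : Prop :=
  [/\ s != [::], size s < size t, drop (size t - size s) t = s &
      forall i, 0 < i < size t -> lexle s (drop i t)].

(* Iterated standard factorization of l w.r.t. u:  l = r_j s_j s_(j-1) ... s_1,
   encoded as r = r_j and ss = [:: s_j; s_(j-1); ...; s_1]  (j = size ss >= 1). *)
Definition is_ISF (l : word) (u : option word) (r : word) (ss : seq word) : Prop :=
  [/\ ss != [::], l = r ++ flatten ss,
      (forall k, k < size ss ->
         smallest_proper_suffix (nth [::] ss k) (r ++ flatten (take k.+1 ss))),
      (forall s, s \in behead ss -> ~~ odd (size s) && ltw (Some s) u) &
      odd (size (head [::] ss)) || lew u (Some (head [::] ss))].

Definition olast (os : seq word) : option word :=
  if os is [::] then None else Some (last [::] os).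

Definition dropl (os : seq word) : seq word := take (size os).-1 os.

(* i-th factor (1-based), infinity if i <= 0 or out of range *)
Definition fact_at (os : seq word) (i : nat) : option word :=
  if (0 < i) && (i <= size os) then Some (nth [::] os i.-1) else None.

Definition stepS (os' es' : seq word) (O E : word) : Prop :=
  match es' with
  | e1 :: rest => [/\ ltw (olast os') (Some e1), O = flatten os' ++ e1 & E = flatten rest]
  | [::] => False
  end.

Definition stepP (os' es' : seq word) (r : word) (ss : seq word) (O E : word) : Prop :=
  match es', ss with
  | e1 :: rest, sj :: ssr =>
      [/\ ~~ ltw (olast os') (Some e1), is_ISF e1 (olast os') r ss,
          lew (olast os') (Some sj),
          O = flatten (dropl os') ++ r ++ sj ++ odflt [::] (olast os') &
          E = flatten ssr ++ flatten rest]
  | _, _ => False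
  end.

Definition stepF (os' es' : seq word) (r : word) (ss : seq word) (O E : word) : Prop :=
  match es', ss with
  | e1 :: rest, sj :: ssr =>
      [/\ ~~ ltw (olast os') (Some e1), is_ISF e1 (olast os') r ss,
          ltw (Some sj) (olast os'),
          O = flatten os' ++ sj ++ r &
          E = flatten ssr ++ flatten rest]
  | _, _ => False
  end.

Definition omega_step (O' E' O E : word) : Prop :=
  exists os' es', [/\ is_lyndon_fact O' os', is_lyndon_fact E' es' &
    stepS os' es' O E \/ (exists r ss, stepP os' es' r ss O E)
                      \/ (exists r ss, stepF os' es' r ss O E)].

Definition in_We (n : nat) (w : word) : Prop :=
  size w = n /\
  exists fs, [/\ is_lyndon_fact w fs,
                 all (fun f => odd (size f) ==> (size f == 1%N)) fs &
                 count (fun f => odd (size f)) fs <= 1].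

Definition omega_init (w O E : word) : Prop :=
  exists fs, is_lyndon_fact w fs /\
    if odd (size w) then
      exists f1 f2 a, [/\ fs = f1 ++ [:: [:: a]] ++ f2, O = [:: a] & E = flatten (f1 ++ f2)]
    else O = [::] /\ E = w.

Inductive omega_reach (w : word) : word -> word -> Prop :=
| omega_reach0 O E : omega_init w O E -> omega_reach w O E
| omega_reachS O' E' O E : omega_reach w O' E' -> E' != [::] ->
    omega_step O' E' O E -> omega_reach w O E.

End Words.

(* Main.v *)
Require Import Defs.
From mathcomp Require Import all_boot all_order zify.
Set Implicit Arguments. Unset Strict Implicit. Unset Printing Implicit Defensive.
Import Order.TTheory.

Section Lex.
Context {d : Order.disp_t} {A : finOrderType d}.
Local Notation word := (seq A).
Implicit Types u v w x y p q s t : word.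

Lemma lexlt_irr u : lexlt u u = false.
Proof. by elim: u => //= a u ->; rewrite ltxx eqxx. Qed.

Lemma lexlt_trans : transitive (@lexlt d A).
Proof.
move=> v u w; elim: u v w => [|a u IH] [|b v] [|c w] //=.
case/orP=> [ab|/andP[/eqP-> uv]]; case/orP=> [bc|/andP[/eqP<- vw]].
- by rewrite (lt_trans ab bc).
- by rewrite ab.
- by rewrite bc.
- by rewrite eqxx (IH _ _ uv vw) orbT.
Qed.

Lemma lexlt_total u v : u != v -> lexlt u v || lexlt v u.
Proof.
elim: u v => [|a u IH] [|b v] //=.
case: (ltgtP a b) => //= ab; rewrite ?orbT //.
subst b; rewrite eqseq_cons eqxx /= => /IH.
by [].
Qed.

Lemma lexlt_asym u v : lexlt u v -> lexlt v u = false.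
Proof.
move=> uv; apply/negP=> vu; have := lexlt_trans uv vu.
by rewrite lexlt_irr.
Qed.

Lemma lexleNgt u v : lexle u v = ~~ lexlt v u.
Proof.
rewrite /lexle; case: (eqVneq u v) => [->|uv] /=; first by rewrite lexlt_irr.
case/orP: (lexlt_total uv) => H; first by rewrite H (lexlt_asym H).
by rewrite H (lexlt_asym H).
Qed.

Lemma lexltNge u v : lexlt u v = ~~ lexle v u.
Proof. by rewrite lexleNgt negbK. Qed.

Lemma lexle_refl u : lexle u u.
Proof. by rewrite /lexle eqxx. Qed.

Lemma lexle_trans : transitive (@lexle d A).
Proof.
move=> v u w; rewrite /lexle.
case/orP=> [/eqP->//|uv]; case/orP=> [/eqP<-|vw]; first by rewrite uv orbT.
by rewrite (lexlt_trans uv vw) orbT.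
Qed.

Lemma lexle_lt_trans v u w : lexle u v -> lexlt v w -> lexlt u w.
Proof. by case/orP=> [/eqP->//|uv] vw; exact: lexlt_trans uv vw. Qed.

Lemma lexlt_le_trans v u w : lexlt u v -> lexle v w -> lexlt u w.
Proof. by move=> uv; case/orP=> [/eqP<-//|vw]; exact: lexlt_trans uv vw. Qed.

Lemma lexltW u v : lexlt u v -> lexle u v.
Proof. by rewrite /lexle => ->; rewrite orbT. Qed.

Lemma lexle_anti u v : lexle u v -> lexle v u -> u = v.
Proof.
rewrite /lexle; case/orP=> [/eqP//|uv]; case/orP=> [/eqP//|vu].
by rewrite (lexlt_asym uv) in vu.
Qed.

Lemma lexle_neq u v : lexle u v -> u != v -> lexlt u v.
Proof. by rewrite /lexle => /orP[/eqP->|//]; rewrite eqxx. Qed.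

Lemma lexlt_catl p u v : lexlt (p ++ u) (p ++ v) = lexlt u v.
Proof. by elim: p => //= a p ->; rewrite ltxx eqxx. Qed.

Lemma lexle_catl p u v : lexle (p ++ u) (p ++ v) = lexle u v.
Proof. by rewrite /lexle lexlt_catl eqseq_cat // eqxx. Qed.

Lemma lexlt_prefix u x : x != [::] -> lexlt u (u ++ x).
Proof.
elim: u => [|a u IH] /=; first by case: x.
by move=> /IH ->; rewrite eqxx orbT.
Qed.

Lemma lexle_prefix u x : lexle u (u ++ x).
Proof.
case: (eqVneq x [::]) => [->|/lexlt_prefix H]; first by rewrite cats0 lexle_refl.
exact: lexltW.
Qed.

Lemma lexlt_catr e y t : lexlt e y -> lexlt e (y ++ t).
Proof.
elim: e y => [|a e IH] [|b y] //= /orP[->//|/andP[-> /IH ->]].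
by rewrite orbT.
Qed.

Lemma lexle_catr e y t : lexle e y -> lexle e (y ++ t).
Proof.
case/orP=> [/eqP->|H]; first exact: lexle_prefix.
by apply: lexltW; apply: lexlt_catr.
Qed.

Lemma lexltP u v : lexlt u v ->
  (exists2 x, x != [::] & v = u ++ x) \/ (forall x y, lexlt (u ++ x) (v ++ y)).
Proof.
elim: u v => [|a u IH] [|b v] //=.
- by move=> _; left; exists (b :: v).
case/orP=> [ab|/andP[/eqP<- uv]]; first by right=> x y /=; rewrite ab.
case: (IH _ uv) => [[x nx ->]|H]; first by left; exists x.
by right=> x y /=; rewrite eqxx H orbT.
Qed.

Lemma lexlt_nil u : lexlt [::] u = (u != [::]).
Proof. by case: u. Qed.

Lemma lexlt_size_strong u v x y : lexlt u v -> size v <= size u ->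
  lexlt (u ++ x) (v ++ y).
Proof.
move=> /lexltP [[z nz ->]|//].
rewrite size_cat -{2}(addn0 (size u)) leq_add2l leqn0 size_eq0.
by rewrite (negbTE nz).
Qed.

Lemma cat_split x y p q : x ++ y = p ++ q -> size x <= size p ->
  exists z, p = x ++ z /\ y = z ++ q.
Proof.
elim: x p => [|a x IH] p /=; first by move=> ->; exists p.
case: p => [|b p] //= [<- E] H.
by case: (IH _ E H) => z [-> ->]; exists z.
Qed.

Lemma lyndon_suf w p y : lyndon w -> w = p ++ y -> p != [::] -> y != [::] ->
  lexlt w y.
Proof.
case/andP=> _ /allP H E np ny; have := H (size p).
rewrite mem_iota E drop_size_cat // size_cat; apply.
rewrite lt0n size_eq0 np /= add1n prednK; last by rewrite addn_gt0 lt0n size_eq0 np.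
by rewrite -{1}(addn0 (size p)) ltn_add2l lt0n size_eq0.
Qed.

Lemma lyndonI w : w != [::] ->
  (forall p y, w = p ++ y -> p != [::] -> y != [::] -> lexlt w y) -> lyndon w.
Proof.
move=> nw H; rewrite /lyndon nw /=; apply/allP=> i.
rewrite mem_iota add1n prednK ?lt0n ?size_eq0 // => /andP[i1 i2].
apply: (H (take i w) (drop i w)); first by rewrite cat_take_drop.
  by rewrite -size_eq0 size_take i2.
by rewrite -size_eq0 size_drop subn_eq0 -ltnNge.
Qed.

Lemma lyndon_neq0 w : lyndon w -> w != [::].
Proof. by case/andP. Qed.

Lemma lyndon_cat_lt u v : lyndon u -> lyndon v -> lexlt u v -> lexlt (u ++ v) v.
Proof.
move=> Lu Lv uv; case: (lexltP uv) => [[x nx E]|H]; last first.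
  by have := H v [::]; rewrite cats0.
have nu := lyndon_neq0 Lu.
rewrite {2}E lexlt_catl; exact: lyndon_suf Lv E nu nx.
Qed.

Lemma lyndon_cat u v : lyndon u -> lyndon v -> lexlt u v -> lyndon (u ++ v).
Proof.
move=> Lu Lv uv; have nu := lyndon_neq0 Lu.
apply: lyndonI; first by case: (u) nu.
move=> p y E np ny; case: (leqP (size u) (size p)) => H.
  case: (cat_split E H) => z [Ep Ev].
  have Hv := lyndon_cat_lt Lu Lv uv.
  case: (eqVneq z [::]) => [z0|nz]; first by move: Hv; rewrite Ev z0.
  apply: lexlt_trans Hv _; exact: lyndon_suf Lv Ev nz ny.
have H' : size p <= size u by apply: ltnW.
case: (cat_split (esym E) H') => z [Eu Ey].
have nz : z != [::].
  by apply/eqP=> z0; move: H; rewrite Eu z0 cats0 ltnn.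
have uz := lyndon_suf Lu Eu np nz.
rewrite Ey; apply: lexlt_size_strong => //.
by rewrite Eu size_cat leq_addl.
Qed.

Lemma lyndon_lt_all (L a b : word) : lyndon L -> lexlt a L -> lexlt b L -> lexlt (a ++ b) L.
Proof.
move=> LL aL bL; case: (lexltP aL) => [[x nx E]|H]; last first.
  by have := H b [::]; rewrite cats0.
case: (eqVneq a [::]) => [->//|na].
rewrite [X in lexlt _ X]E lexlt_catl; apply: lexlt_trans bL _; exact: lyndon_suf LL E na nx.
Qed.

Lemma lyndon_lt_flatten (L : word) (fs : seq word) : lyndon L -> all (fun f => lexlt f L) fs ->
  lexlt (flatten fs) L.
Proof.
move=> LL; elim: fs => [|f fs IH] /=; first by case: (L) (lyndon_neq0 LL).
by case/andP=> fL /IH H; apply: lyndon_lt_all.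
Qed.

End Lex.

Section Min.
Context {d : Order.disp_t} {A : finOrderType d}.
Local Notation word := (seq A).
Implicit Types u v w x y p q s t a c : word.

Lemma cat_nil_l p y : p != [::] -> p ++ y != [::].
Proof. by case: p. Qed.

Definition minsuf s t := [/\ s != [::], exists2 p, p != [::] & t = p ++ s &
  forall p y, t = p ++ y -> p != [::] -> y != [::] -> lexle s y].

Lemma sps_minsuf s t : smallest_proper_suffix s t -> minsuf s t.
Proof.
case=> ns st dr H; split=> //.
  exists (take (size t - size s) t); last by rewrite -{2}dr cat_take_drop.
  rewrite -size_eq0 size_take; case: ifP => _; rewrite -lt0n ?subn_gt0 //.
  by apply: leq_ltn_trans st.
move=> p y E np ny; have := H (size p).
rewrite E drop_size_cat //; apply.
rewrite lt0n size_eq0 np size_cat -{1}(addn0 (size p)) ltn_add2l lt0n size_eq0.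
by rewrite ny.
Qed.

Lemma minsuf_lyndon s t : minsuf s t -> lyndon s.
Proof.
case=> ns [p np E] H; apply: lyndonI => // p' y' E' np' ny'.
apply: lexle_neq.
  apply: (H (p ++ p')) => //; first by rewrite E E' catA.
  by case: (p) np.
apply/eqP=> sy; move: (congr1 size E'); rewrite -sy size_cat.
rewrite -{1}(add0n (size s)) => /eqP; rewrite eqn_add2r eq_sym size_eq0.
by rewrite (negbTE np').
Qed.

Lemma minsuf_chain t a s c dd : t = a ++ s -> minsuf s t -> a = c ++ dd ->
  c != [::] -> dd != [::] -> lexle s dd.
Proof.
move=> Et [ns _ H] Ea nc nd; rewrite lexleNgt; apply/negP=> ds.
have Hds : lexlt (dd ++ s) s.
  case: (lexltP ds) => [[x nx E]|HH]; last by have := HH s [::]; rewrite cats0.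
  rewrite [X in lexlt _ X]E lexlt_catl; apply: lexle_neq.
    apply: (H (a ++ dd)) => //; first by rewrite Et E catA.
    by case: (a) Ea nc => [|? ?] //; case: (c).
  apply/eqP=> sx; move: (congr1 size E); rewrite -sx size_cat.
  rewrite -{1}(add0n (size s)) => /eqP; rewrite eqn_add2r eq_sym size_eq0.
  by rewrite (negbTE nd).
have := H c (dd ++ s) ltac:(by rewrite Et Ea catA) nc (cat_nil_l s nd).
by rewrite lexleNgt Hds.
Qed.

Lemma catIs' p q s : p ++ s = q ++ s -> p = q.
Proof.
move=> E; have Hs : size p = size q.
  by move: (congr1 size E); rewrite !size_cat => /eqP; rewrite eqn_add2r => /eqP.
by move/eqP: E; rewrite eqseq_cat // => /andP[/eqP].
Qed.

Lemma minsuf_lyndon_pre t a s : lyndon t -> t = a ++ s -> minsuf s t -> lyndon a.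
Proof.
move=> Lt Et Ms; case: (Ms) => ns [p np Ep] H.
have Eap : a = p by apply: (@catIs' _ _ s); rewrite -Et -Ep.
apply: lyndonI; first by rewrite Eap.
move=> p' y Ea np' ny; rewrite lexltNge; apply/negP=> ya.
have nya : y != a.
  apply/eqP=> ya'; move: (congr1 size Ea); rewrite -ya' size_cat.
  rewrite -{1}(add0n (size y)) => /eqP; rewrite eqn_add2r eq_sym size_eq0.
  by rewrite (negbTE np').
have yat := lexle_neq ya nya.
have tys : lexlt t (y ++ s).
  by apply: (lyndon_suf Lt (p := p')) => //; [rewrite Et Ea catA | case: (y) ny].
case: (lexltP yat) => [[x nx E]|HH]; last first.
  by have := HH s s; rewrite -Et (lexlt_asym tys).
move: tys; rewrite Et E -catA lexlt_catl => xs.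
have ny' : y != [::] by [].
have := H y (x ++ s) ltac:(by rewrite Et E catA) ny' (cat_nil_l s nx).
by rewrite lexleNgt xs.
Qed.

Lemma minsuf_std t a s : lyndon t -> t = a ++ s -> minsuf s t -> std_fact t a s.
Proof.
move=> Lt Et Ms; case: (Ms) => ns [p np Ep] H.
have Eap : a = p by apply: (@catIs' _ _ s); rewrite -Et -Ep.
split=> //; first by rewrite Eap.
  exact: minsuf_lyndon Ms.
move=> i /andP[i0 it] Lz; rewrite leqNgt; apply/negP=> zs.
have ia : i < size a.
  move: zs; rewrite size_drop Et size_cat => zs.
  rewrite ltnNge; apply/negP=> ai; move: zs.
  lia.
move: Lz zs; rewrite Et drop_cat ia => Lz zs.
have nq : drop i a != [::] by rewrite -size_eq0 size_drop subn_eq0 -ltnNge.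
have zls := lyndon_suf Lz erefl nq ns.
have nt : take i a != [::] by rewrite -size_eq0 size_take ia -lt0n.
have := H (take i a) (drop i a ++ s) ltac:(by rewrite catA cat_take_drop) nt
  (cat_nil_l s nq).
by rewrite lexleNgt zls.
Qed.

Lemma std_unique l r s r' s' : std_fact l r s -> std_fact l r' s' -> s = s'.
Proof.
case=> nr E Ls H; case=> nr' E' Ls' H'.
have sz : forall (r1 s1 s1' : word), r1 != [::] -> l = r1 ++ s1 -> lyndon s1 ->
   (forall i, 0 < i < size l -> lyndon (drop i l) -> size (drop i l) <= size s1') ->
   size s1 <= size s1'.
  move=> r1 s1 s1' nr1 E1 L1 H1; have := H1 (size r1).
  rewrite E1 drop_size_cat //; apply=> //.
  rewrite lt0n size_eq0 nr1 size_cat -{1}(addn0 (size r1)) ltn_add2l lt0n size_eq0.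
  by rewrite lyndon_neq0.
have e1 := sz _ _ _ nr E Ls H'.
have e2 := sz _ _ _ nr' E' Ls' H.
have ess : size s = size s' by apply/eqP; rewrite eqn_leq e1 e2.
have err : size r = size r'.
  by move: (congr1 size E); rewrite E' !size_cat ess => /eqP; rewrite eqn_add2r => /eqP.
by move/eqP: E; rewrite E' eqseq_cat // => /andP[_ /eqP].
Qed.

Lemma min_exists (l : seq word) : l != [::] ->
  exists2 m, m \in l & forall y, y \in l -> lexle m y.
Proof.
elim: l => [|x l IH] // _.
case: (eqVneq l [::]) => [->|nl].
  by exists x; rewrite ?mem_seq1 // => y; rewrite mem_seq1 => /eqP->; exact: lexle_refl.
case: (IH nl) => m ml Hm.
case: (boolP (lexle x m)) => xm.
  exists x; first by rewrite mem_head.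
  move=> y; rewrite in_cons => /orP[/eqP->|yl]; first exact: lexle_refl.
  exact: lexle_trans xm (Hm _ yl).
exists m; first by rewrite in_cons ml orbT.
move=> y; rewrite in_cons => /orP[/eqP->|yl]; last exact: Hm.
by rewrite lexleNgt negbK in xm; exact: lexltW.
Qed.

Lemma std_exists t : lyndon t -> 2 <= size t ->
  exists a s, std_fact t a s /\ minsuf s t.
Proof.
move=> Lt st.
have : [seq drop i t | i <- iota 1 (size t).-1] != [::].
  by case: (size t) st => [|[|n]].
case/min_exists=> m /mapP [i]; rewrite mem_iota add1n prednK; last by case: (size t) st.
case/andP=> i1 i2 -> Hm.
have Ms : minsuf (drop i t) t.
  split.
  - by rewrite -size_eq0 size_drop subn_eq0 -ltnNge.
  - exists (take i t); last by rewrite cat_take_drop.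
    by rewrite -size_eq0 size_take i2 -lt0n.
  move=> p y E np ny; apply: Hm; apply/mapP; exists (size p).
    rewrite mem_iota add1n prednK; last by case: (size t) st.
    rewrite lt0n size_eq0 np E size_cat -{1}(addn0 (size p)) ltn_add2l.
    by rewrite lt0n size_eq0.
  by rewrite E drop_size_cat.
exists (take i t), (drop i t); split=> //.
by apply: minsuf_std=> //; rewrite cat_take_drop.
Qed.

Definition geR := fun x y : word => lexle y x.

Lemma geR_trans : transitive geR.
Proof. move=> v u w; rewrite /geR => uv vw; exact: lexle_trans vw uv. Qed.

Lemma flatten_prefix (fs : seq word) v G : flatten fs = v ++ G -> v != [::] ->
  exists c u tt f2, [/\ v = c ++ u, u != [::], f2 \in fs & f2 = u ++ tt].
Proof.
elim: fs v => [|f2 fs IH] v /=; first by case: v.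
move=> E nv; case: (leqP (size v) (size f2)) => H.
  case: (cat_split (esym E) H) => z [Ef _].
  by exists [::], v, z, f2; rewrite mem_head.
have H' : size f2 <= size v by apply: ltnW.
case: (cat_split E H') => z [Ev Ef].
have nz : z != [::] by apply/eqP=> z0; move: H; rewrite Ev z0 cats0 ltnn.
case: (IH _ Ef nz) => c [u [tt [f3 [Ez nu f3in Ef3]]]].
exists (f2 ++ c), u, tt, f3; split=> //; first by rewrite Ev Ez catA.
by rewrite in_cons f3in orbT.
Qed.

Lemma key_lt f fs g G : f ++ flatten fs = g ++ G -> size f < size g ->
  lyndon f -> lyndon g -> sorted geR (f :: fs) -> False.
Proof.
move=> E sfg Lf Lg So.
case: (cat_split E (ltnW sfg)) => v [Eg Ef].
have nv : v != [::] by apply/eqP=> v0; move: sfg; rewrite Eg v0 cats0 ltnn.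
have nf := lyndon_neq0 Lf.
have gv := lyndon_suf Lg Eg nf nv.
case: (flatten_prefix Ef nv) => c [u [tt [f2 [Ev nu f2in Ef2]]]].
have gu : lexlt g u.
  by apply: (lyndon_suf Lg (p := f ++ c)) => //; [rewrite Eg Ev catA | case: (f) nf].
have uf2 : lexle u f2 by rewrite Ef2; apply: lexle_prefix.
have f2f : lexle f2 f.
  by have := order_path_min geR_trans So => /allP /(_ _ f2in).
have fg : lexle f g by rewrite Eg; apply: lexle_prefix.
have := lexle_trans uf2 (lexle_trans f2f fg).
by rewrite lexleNgt gu.
Qed.

Lemma all_lyndon_nil (gs : seq word) : all lyndon gs -> flatten gs = [::] -> gs = [::].
Proof. by case: gs => [|g gs] //= /andP[/lyndon_neq0]; case: g. Qed.

Lemma lf_unique w fs gs : is_lyndon_fact w fs -> is_lyndon_fact w gs -> fs = gs.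
Proof.
case=> Ef Lf Sf [Eg Lg Sg]; rewrite -Eg in Ef; clear Eg w.
elim: fs gs Ef Lf Sf Lg Sg => [|f fs IH] gs.
  by move=> /= E _ _ Lg _; rewrite (all_lyndon_nil Lg (esym E)).
case: gs => [|g gs] E.
  by move=> Lf _ _ _; move: (all_lyndon_nil Lf E).
move=> /= /andP[Lf1 Lfs] Sf /andP[Lg1 Lgs] Sg.
case: (ltngtP (size f) (size g)) => H.
- by case: (key_lt E H Lf1 Lg1 Sf).
- by case: (key_lt (esym E) H Lg1 Lf1 Sg).
move/eqP: E; rewrite /= eqseq_cat // => /andP[/eqP-> /eqP E'].
by rewrite (IH gs E' Lfs (path_sorted Sf) Lgs (path_sorted Sg)).
Qed.

End Min.

Section ISF.
Context {d : Order.disp_t} {A : finOrderType d}.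
Local Notation word := (seq A).

Lemma ISF_facts (e1 : word) u r sj ssr : lyndon e1 -> is_ISF e1 u r (sj :: ssr) ->
  [/\ e1 = r ++ sj ++ flatten ssr, lyndon r, minsuf sj (r ++ sj),
      sorted geR (sj :: ssr) & lexlt e1 (last sj ssr)] /\
  (all lyndon (sj :: ssr) /\ lyndon (r ++ sj)).
Proof.
move=> Le1; case=> _ Ee1 HM _ _; set ss := sj :: ssr.
pose T k := r ++ flatten (take k ss).
have MS : forall k, k < size ss -> minsuf (nth [::] ss k) (T k.+1).
  by move=> k Hk; apply: sps_minsuf; apply: HM.
have TS : forall k, k < size ss -> T k.+1 = T k ++ nth [::] ss k.
  by move=> k Hk; rewrite /T (take_nth [::]) // flatten_rcons catA.
have Tn : T (size ss) = e1 by rewrite /T take_size.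
have LT : forall m, m <= size ss -> lyndon (T (size ss - m)).
  elim=> [|m IH] Hm; first by rewrite subn0 Tn.
  have Hk : size ss - m.+1 < size ss by lia.
  have E : (size ss - m.+1).+1 = size ss - m by lia.
  apply: (minsuf_lyndon_pre (t := T (size ss - m.+1).+1)).
  - by rewrite E; apply: IH; lia.
  - exact: TS.
  - exact: MS.
have T0 : T 0 = r by rewrite /T take0 /= cats0.
have Lr : lyndon r by rewrite -T0 -(subnn (size ss)); apply: LT.
have nr := lyndon_neq0 Lr.
have TnZ : forall k, T k != [::] by move=> k; rewrite /T; apply: cat_nil_l.
split; last split.
2: apply/allP=> x /(nthP [::]) [k Hk <-]; exact: minsuf_lyndon (MS k Hk).
2: have := LT (size ss).-1 (leq_pred _);
  by rewrite /ss /= subSn // subnn /T /= take0 cats0.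
split.
- by rewrite Ee1.
- exact: Lr.
- by have := MS 0 erefl; rewrite /T /= take0 /= cats0.
- apply/(sortedP [::]) => k Hk; rewrite /geR.
  have Hk' : k < size ss := ltnW Hk.
  apply: (minsuf_chain (TS _ Hk) (MS _ Hk) (TS _ Hk') (TnZ k)).
  by case: (MS _ Hk').
- have Hl : (size ss).-1 < size ss by rewrite /ss /=.
  have := MS _ Hl; rewrite nth_last /= -[(size ssr).+1]/(size ss) Tn => -[nl [p np Ep] _].
  exact: lyndon_suf Le1 Ep np nl.
Qed.

Lemma ISF_suffix (e1 : word) u r sj ssr c dd : lyndon e1 -> is_ISF e1 u r (sj :: ssr) ->
  r = c ++ dd -> c != [::] -> dd != [::] -> lexle sj dd.
Proof.
move=> Le1 HI Er nc nd; case: (ISF_facts Le1 HI) => -[_ _ Ms _ _] _.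
exact: minsuf_chain erefl Ms Er nc nd.
Qed.

Lemma even_flatten (ss : seq word) : all (fun s => ~~ odd (size s)) ss ->
  ~~ odd (size (flatten ss)).
Proof.
elim: ss => [|s ss IH] //= /andP[es /IH H].
by rewrite size_cat oddD (negbTE es) (negbTE H).
Qed.

Lemma odd_flatten_count (fs : seq word) :
  odd (size (flatten fs)) = odd (count (fun f => odd (size f)) fs).
Proof.
elim: fs => [|f fs IH] //=.
by rewrite size_cat !oddD IH oddb.
Qed.

End ISF.

Section Step.
Context {d : Order.disp_t} {A : finOrderType d}.
Local Notation word := (seq A).

Definition gtR := fun x y : word => lexlt y x.

Lemma gtR_trans : transitive gtR.
Proof. move=> v u w; rewrite /gtR => uv vw; exact: lexlt_trans vw uv. Qed.

Lemma olast_rcons (s : seq word) x : olast (rcons s x) = Some x.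
Proof. by case: s => //= y s; rewrite last_rcons. Qed.

Lemma dropl_rcons (s : seq word) x : dropl (rcons s x) = s.
Proof. by rewrite /dropl size_rcons /= -cats1 take_size_cat. Qed.

Lemma fact_at_last (s : seq word) x :
  fact_at (rcons s x) (size (rcons s x)).-1 = olast s.
Proof.
rewrite size_rcons /= /fact_at; case: s => [|y s] //=.
rewrite size_rcons ltnS leqW // -rcons_cons nth_rcons /= ltnS leqnn.
by rewrite -[size s]/((size (y :: s)).-1) nth_last.
Qed.

Lemma lew_some (a b : word) : lew (Some a) (Some b) = lexle a b.
Proof. by []. Qed.

Lemma ltw_lew (x y : option word) : ltw x y -> lew y x = false.
Proof.
case: x => [a|]; case: y => [b|] //=.
  by move=> ab; rewrite lew_some lexleNgt ab.
Qed.

Lemma rcons_last_eq (p q : seq word) a b : rcons p a = rcons q b -> a = b.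
Proof. by move/(congr1 (last [::])); rewrite !last_rcons. Qed.

Lemma sorted_rconsE (e : rel word) s a :
  sorted e (rcons s a) = sorted e s && (if olast s is Some L then e L a else true).
Proof. by case: s => [|x s] //=; rewrite rcons_path. Qed.

Lemma sorted_strict (s : seq word) : sorted geR s -> uniq s -> sorted gtR s.
Proof.
case: s => [|x s] //=; elim: s x => [|y s IH] x //= /andP[xy ps] /andP[nx uy].
apply/andP; split; last exact: IH.
rewrite /gtR; apply: lexle_neq; first exact: xy.
by apply/eqP=> E; move: nx; rewrite E mem_head.
Qed.

Lemma gtR_geR (s : seq word) : sorted gtR s -> sorted geR s.
Proof. by apply: sub_sorted => x y; rewrite /gtR /geR; apply: lexltW. Qed.

Lemma gtR_uniq (s : seq word) : sorted gtR s -> uniq s.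
Proof. by apply: sorted_uniq; [exact: gtR_trans | move=> x; rewrite /gtR lexlt_irr]. Qed.

Definition GoodO (E : word) (os : seq word) : Prop :=
  [/\ all (fun o => odd (size o)) os, uniq os,
      ltw (Some E) (fact_at os (size os).-1) &
      forall pre om r s es e1 rest, os = rcons pre om -> 2 <= size om ->
        std_fact om r s -> is_lyndon_fact E es -> es = e1 :: rest -> lexle e1 s].

Definition Inv (O E : word) : Prop :=
  (forall es, is_lyndon_fact E es -> all (fun e => ~~ odd (size e)) es) /\
  (forall os, is_lyndon_fact O os -> GoodO E os).

Lemma goodI O E osN esN : is_lyndon_fact O osN -> is_lyndon_fact E esN ->
  all (fun e => ~~ odd (size e)) esN -> all (fun o => odd (size o)) osN ->
  sorted gtR osN -> ltw (Some E) (fact_at osN (size osN).-1) ->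
  (forall pre om r s, osN = rcons pre om -> 2 <= size om -> std_fact om r s ->
     all (fun f => lexle f s) esN) -> Inv O E.
Proof.
move=> FO FE ev od so lt Hiv; split.
  by move=> es FE'; rewrite -(lf_unique FE FE').
move=> os FO'; rewrite -(lf_unique FO FO'); split=> //.
  exact: gtR_uniq.
move=> pre om r s es e1 rest Eo so2 st FE' Ee.
have := Hiv _ _ _ _ Eo so2 st; rewrite (lf_unique FE FE') Ee /=.
by case/andP.
Qed.

Lemma std_cat (u v : word) : lyndon v -> u != [::] ->
  (forall c y, u = c ++ y -> c != [::] -> y != [::] -> lexle v y) ->
  std_fact (u ++ v) u v.
Proof.
move=> Lv nu H; split=> // i /andP[i0 it] Lz; rewrite leqNgt; apply/negP=> zs.
have iu : i < size u.
  move: zs; rewrite size_drop size_cat; lia.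
move: Lz; rewrite drop_cat iu => Lz.
have nq : drop i u != [::] by rewrite -size_eq0 size_drop subn_eq0 -ltnNge.
have nt : take i u != [::] by rewrite -size_eq0 size_take iu -lt0n.
have vy := H (take i u) (drop i u) (esym (cat_take_drop i u)) nt nq.
have zv := lyndon_suf Lz erefl nq (lyndon_neq0 Lv).
have := lexle_catr v vy.
by rewrite lexleNgt zv.
Qed.

Lemma fact_cons (E : word) e1 rest : is_lyndon_fact E (e1 :: rest) ->
  [/\ E = e1 ++ flatten rest, lyndon e1, all lyndon rest,
      all (fun f => lexle f e1) rest & is_lyndon_fact (flatten rest) rest].
Proof.
case=> <- /= /andP[L1 Lr] So; split=> //.
  exact: (order_path_min geR_trans So).
by split=> //; exact: path_sorted So.
Qed.

Lemma es_fact (e1 : word) rest sj ssr : all lyndon rest -> sorted geR (e1 :: rest) ->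
  all lyndon (sj :: ssr) -> sorted geR (sj :: ssr) -> lexlt e1 (last sj ssr) ->
  is_lyndon_fact (flatten ssr ++ flatten rest) (ssr ++ rest).
Proof.
move=> Lr Sr Ls Ss lt; split.
- by rewrite flatten_cat.
- by rewrite all_cat Lr andbT; case/andP: Ls.
have S2 : sorted geR (sj :: ssr ++ e1 :: rest).
  rewrite /= cat_path; apply/andP; split; first exact: Ss.
  apply/andP; split; [exact: lexltW lt | exact: Sr].
change (sorted geR (ssr ++ rest)); apply: (subseq_sorted geR_trans) S2.
have : subseq (ssr ++ rest) (ssr ++ e1 :: rest).
  by apply: cat_subseq; [exact: subseq_refl | exact: subseq_cons].
move/subseq_trans; apply; exact: subseq_cons.
Qed.

End Step.

Section Cases.
Context {d : Order.disp_t} {A : finOrderType d}.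
Local Notation word := (seq A).

Lemma pre_facts (pre : seq word) oh E' L : all lyndon (rcons pre oh) ->
  sorted gtR (rcons pre oh) ->
  ltw (Some E') (fact_at (rcons pre oh) (size (rcons pre oh)).-1) ->
  olast pre = Some L -> [/\ lyndon L, lexlt oh L & lexlt E' L].
Proof.
rewrite fact_at_last => AL So H3 EL; rewrite EL in H3; split=> //.
- move/allP: AL; apply; rewrite mem_rcons in_cons; apply/orP; right.
  by case: pre EL {So H3} => //= x p [<-]; exact: mem_last.
- by move: So; rewrite sorted_rconsE EL => /andP[].
Qed.

Lemma caseS O' E' O E (os' : seq word) e1 rest :
  Inv O' E' -> is_lyndon_fact O' os' -> is_lyndon_fact E' (e1 :: rest) ->
  stepS os' (e1 :: rest) O E ->
  Inv O E /\ (is_lyndon_fact O (rcons (dropl os') (last [::] os' ++ e1)) /\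
     std_fact (last [::] os' ++ e1) (last [::] os') e1).
Proof.
move=> [IE IO] FO FE [lt EO EE].
have /andP[_ Evr] := IE _ FE.
case: (IO _ FO) => od un H3 H4.
case: FO => EO' AL So.
case/lastP: os' EO' AL So lt EO od un H3 H4 => [|pre oh] //.
rewrite olast_rcons /= => EO' AL So lt EO od un H3 H4.
have So' := sorted_strict So un.
case: (fact_cons FE) => EE' L1 Lr Rle Frest.
have Loh : lyndon oh by move: AL; rewrite all_rcons => /andP[].
set X := oh ++ e1.
have LX : lyndon X := lyndon_cat Loh L1 lt.
have stdX : std_fact X oh e1.
  apply: std_cat L1 (lyndon_neq0 Loh) _ => c y Eo nc ny.
  have sz : 2 <= size oh.
    by rewrite Eo size_cat; move: nc ny; rewrite -!size_eq0; case: (size c) => // n; case: (size y) => // m; rewrite addSn addnS.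
  case: (std_exists Loh sz) => a [s [st [_ _ ms]]].
  have := H4 pre oh a s (e1 :: rest) e1 rest erefl sz st FE erefl.
  move=> H; exact: lexle_trans H (ms c y Eo nc ny).
have e1E : lexle e1 E' by rewrite EE'; apply: lexle_prefix.
have SoX : sorted gtR (rcons pre X).
  have := So'; rewrite !sorted_rconsE => /andP[-> _] /=.
  case EL: (olast pre) => [L|] //.
  case: (pre_facts AL So' H3 EL) => LL ohL E'L.
  apply: lyndon_lt_all => //; exact: lexle_lt_trans e1E E'L.
have FON : is_lyndon_fact O (rcons pre X).
  split.
  - by rewrite EO flatten_rcons flatten_rcons catA.
  - by move: AL; rewrite !all_rcons LX => /andP[_ ->].
  - exact: gtR_geR.
split; last first.
  by rewrite dropl_rcons last_rcons.
apply: (goodI FON _ Evr) => //.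
- by rewrite EE.
- move: od; rewrite !all_rcons => /andP[oo ->]; rewrite andbT /X size_cat oddD oo.
  by move: (IE _ FE) => /andP[/negbTE -> _].
- rewrite fact_at_last; case EL: (olast pre) => [L|] //=.
  case: (pre_facts AL So' H3 EL) => LL ohL E'L.
  rewrite EE; apply: lyndon_lt_flatten => //; apply/allP=> f fr.
  apply: lexle_lt_trans (lexle_lt_trans e1E E'L).
  by move/allP: Rle; apply.
- move=> pre' om r s Eo _ st.
  rewrite -(rcons_last_eq Eo) in st.
  by rewrite (std_unique st stdX).
Qed.

Lemma caseP O' E' O E (os' : seq word) e1 rest r sj ssr :
  Inv O' E' -> is_lyndon_fact O' os' -> is_lyndon_fact E' (e1 :: rest) ->
  stepP os' (e1 :: rest) r (sj :: ssr) O E ->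
  Inv O E /\ (is_lyndon_fact O (rcons (dropl os') (r ++ sj ++ last [::] os')) /\
     std_fact (r ++ sj ++ last [::] os') (r ++ sj) (last [::] os')).
Proof.
move=> [IE IO] FO FE [nlt isf lw EO EE].
have Ev1 : ~~ odd (size e1) by case/andP: (IE _ FE).
have Evr : all (fun e => ~~ odd (size e)) rest by case/andP: (IE _ FE).
case: (IO _ FO) => od un H3 H4.
case: FO => EO' AL So.
case/lastP: os' EO' AL So nlt isf lw EO od un H3 H4 => [|pre oh] //.
rewrite olast_rcons /= => EO' AL So nlt isf lw EO od un H3 H4.
have So' := sorted_strict So un.
case: (fact_cons FE) => EE' L1 Lr Rle Frest.
have Loh : lyndon oh by move: AL; rewrite all_rcons => /andP[].
have ooh : odd (size oh) by move: od; rewrite all_rcons => /andP[].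
have e1oh : lexle e1 oh by rewrite lexleNgt.
have ohsj : lexle oh sj by [].
case: (ISF_facts L1 isf) => -[Ee1 Lr' Ms Sss lastlt] [Lss Ltj].
case: isf => _ _ _ Hb _; rewrite /= in Hb.
have ssr_ev : all (fun s => ~~ odd (size s)) ssr.
  by apply/allP=> x /Hb /andP[].
have ssr_lt : all (fun s => lexlt s oh) ssr.
  by apply/allP=> x /Hb /andP[].
set tj := r ++ sj.
have Ee1' : e1 = tj ++ flatten ssr by rewrite Ee1 catA.
have evtj : ~~ odd (size tj).
  by move: Ev1; rewrite Ee1' size_cat oddD (negbTE (even_flatten ssr_ev)) addbF.
have tjoh : lexlt tj oh.
  apply: lexle_neq; first by apply: lexle_trans e1oh; rewrite Ee1'; apply: lexle_prefix.
  by apply/eqP=> E0; move: evtj; rewrite E0 ooh.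
have ntj : tj != [::] by apply: lyndon_neq0.
set X := tj ++ oh.
have LX : lyndon X := lyndon_cat Ltj Loh tjoh.
have stdX : std_fact X tj oh.
  apply: std_cat Loh ntj _ => c y Eo nc ny.
  case: Ms => _ _ ms; exact: lexle_trans ohsj (ms c y Eo nc ny).
have e1E : lexle tj E' by rewrite EE' Ee1' -catA; apply: lexle_prefix.
have SoX : sorted gtR (rcons pre X).
  have := So'; rewrite !sorted_rconsE => /andP[-> _] /=.
  case EL: (olast pre) => [L|] //.
  case: (pre_facts AL So' H3 EL) => LL ohL E'L.
  apply: lyndon_lt_all => //; exact: lexle_lt_trans e1E E'L.
have FON : is_lyndon_fact O (rcons pre X).
  split.
  - by rewrite EO dropl_rcons flatten_rcons /X -!catA.
  - by move: AL; rewrite !all_rcons LX => /andP[_ ->].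
  - exact: gtR_geR.
have Hrest : all (fun f => lexle f oh) rest.
  by apply/allP=> f /(allP Rle) fe; apply: lexle_trans fe e1oh.
split; last first.
  by rewrite dropl_rcons last_rcons catA.
apply: (goodI FON (esN := ssr ++ rest)) => //.
- by rewrite EE; case: FE => _ _ SoE; apply: (es_fact Lr SoE Lss Sss lastlt).
- by rewrite all_cat ssr_ev Evr.
- move: od; rewrite !all_rcons => /andP[oo ->]; rewrite andbT /X size_cat oddD ooh.
  by rewrite (negbTE evtj).
- rewrite fact_at_last; case EL: (olast pre) => [L|] //=.
  case: (pre_facts AL So' H3 EL) => LL ohL E'L.
  rewrite EE -flatten_cat; apply: lyndon_lt_flatten => //; apply/allP=> f.
  rewrite mem_cat => /orP[fs|fr].
    by apply: lexlt_trans ohL; move/allP: ssr_lt; apply.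
  by apply: lexle_lt_trans ohL; move/allP: Hrest; apply.
- move=> pre' om r' s Eo _ st.
  rewrite -(rcons_last_eq Eo) in st.
  rewrite (std_unique st stdX) all_cat Hrest andbT.
  by apply/allP=> f /(allP ssr_lt) /lexltW.
Qed.

Lemma caseF O' E' O E (os' : seq word) e1 rest r sj ssr :
  Inv O' E' -> is_lyndon_fact O' os' -> is_lyndon_fact E' (e1 :: rest) ->
  stepF os' (e1 :: rest) r (sj :: ssr) O E ->
  Inv O E /\ is_lyndon_fact O (os' ++ [:: sj; r]).
Proof.
move=> [IE IO] FO FE [nlt isf ltsj EO EE].
have Ev1 : ~~ odd (size e1) by case/andP: (IE _ FE).
have Evr : all (fun e => ~~ odd (size e)) rest by case/andP: (IE _ FE).
case: (IO _ FO) => od un H3 H4.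
case: (FO) => EO' AL So.
have So' := sorted_strict So un.
case: (fact_cons FE) => EE' L1 Lr Rle Frest.
case: (ISF_facts L1 isf) => -[Ee1 Lr' Ms Sss lastlt] [Lss Ltj].
have isf' := isf.
case: isf' => _ _ _ Hb Hc; rewrite /= in Hb Hc.
have ssr_ev : all (fun s => ~~ odd (size s)) ssr.
  by apply/allP=> x /Hb /andP[].
have osj : odd (size sj) by move: Hc; rewrite (ltw_lew ltsj) orbF.
have orr : odd (size r).
  move: Ev1; rewrite Ee1 !size_cat !oddD (negbTE (even_flatten ssr_ev)) osj addbF.
  by case: (odd (size r)).
have Lsj : lyndon sj by case/andP: Lss.
have nr := lyndon_neq0 Lr'.
have nsj := lyndon_neq0 Lsj.
have rsj : lexlt r sj.
  apply: lexlt_trans (lexlt_prefix r nsj) _; exact: lyndon_suf Ltj erefl nr nsj.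
have Eos : os' ++ [:: sj; r] = rcons (rcons os' sj) r by rewrite -!cats1 -catA.
have SoN : sorted gtR (rcons (rcons os' sj) r).
  rewrite sorted_rconsE olast_rcons sorted_rconsE /gtR rsj andbT.
  apply/andP; split=> //; case EL: (olast os') ltsj => [L|] //.
have FON : is_lyndon_fact O (rcons (rcons os' sj) r).
  split.
  - by rewrite EO !flatten_rcons EO' catA.
  - by rewrite !all_rcons Lr' Lsj AL.
  - exact: gtR_geR.
have ssr_le : all (fun f => lexle f sj) ssr by apply: (order_path_min geR_trans Sss).
have last_le : lexle (last sj ssr) sj.
  have := mem_last sj ssr; rewrite in_cons => /orP[/eqP->|lm]; first exact: lexle_refl.
  by move/allP: ssr_le; apply.
have Hrest : all (fun f => lexlt f sj) rest.
  apply/allP=> f /(allP Rle) fe; apply: lexle_lt_trans fe _.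
  exact: lexlt_le_trans lastlt last_le.
have Hssr : all (fun f => lexlt f sj) ssr.
  apply/allP=> f fs; apply: lexle_neq; first by move/allP: ssr_le; apply.
  by apply/eqP=> E0; move/allP: ssr_ev => /(_ f fs); rewrite E0 osj.
split; last by rewrite Eos.
apply: (goodI FON (esN := ssr ++ rest)) => //.
- by rewrite EE; case: FE => _ _ SoE; apply: (es_fact Lr SoE Lss Sss lastlt).
- by rewrite all_cat ssr_ev Evr.
- by rewrite !all_rcons orr osj od.
- rewrite fact_at_last olast_rcons /= EE -flatten_cat.
  by apply: lyndon_lt_flatten => //; rewrite all_cat Hssr Hrest.
- move=> pre' om r' s Eo so2 st.
  rewrite -(rcons_last_eq Eo) in st.
  case: st => na Er Ls _.
  have sjs := ISF_suffix L1 isf Er na (lyndon_neq0 Ls).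
  rewrite all_cat; apply/andP; split; apply/allP=> f.
    by move/(allP ssr_le) => fs; apply: lexle_trans fs sjs.
  by move/(allP Hrest) => /lexltW fs; apply: lexle_trans fs sjs.
Qed.

End Cases.

Section Main.
Context {d : Order.disp_t} {A : finOrderType d}.
Local Notation word := (seq A).

Lemma step_all (O' E' O E : word) os' es' :
  Inv O' E' -> is_lyndon_fact O' os' -> is_lyndon_fact E' es' ->
  stepS os' es' O E \/ (exists r ss, stepP os' es' r ss O E)
                    \/ (exists r ss, stepF os' es' r ss O E) ->
  [/\ Inv O E,
      (stepS os' es' O E ->
         is_lyndon_fact O (rcons (dropl os') (last [::] os' ++ head [::] es')) /\
         std_fact (last [::] os' ++ head [::] es') (last [::] os') (head [::] es')),
      (forall r ss, stepP os' es' r ss O E ->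
         is_lyndon_fact O (rcons (dropl os') (r ++ head [::] ss ++ last [::] os')) /\
         std_fact (r ++ head [::] ss ++ last [::] os') (r ++ head [::] ss) (last [::] os')) &
      (forall r ss, stepF os' es' r ss O E ->
         is_lyndon_fact O (os' ++ [:: head [::] ss; r]))].
Proof.
move=> I FO FE H; split.
- case: H => [HS|[[r [ss HP]]|[r [ss HF]]]].
  + by case: es' FE HS => [|e1 rest] // FE HS; case: (caseS I FO FE HS).
  + case: es' FE HP => [|e1 rest] // FE; case: ss => [|sj ssr] // HP.
    by case: (caseP I FO FE HP).
  + case: es' FE HF => [|e1 rest] // FE; case: ss => [|sj ssr] // HF.
    by case: (caseF I FO FE HF).
- by clear H; case: es' FE => [|e1 rest] // FE HS; case: (caseS I FO FE HS).
- clear H; move=> r ss; case: es' FE => [|e1 rest] // FE; case: ss => [|sj ssr] // HP.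
  by case: (caseP I FO FE HP).
- clear H; move=> r ss; case: es' FE => [|e1 rest] // FE; case: ss => [|sj ssr] // HF.
  by case: (caseF I FO FE HF).
Qed.

Lemma lyndon1 (a : A) : lyndon [:: a].
Proof.
apply: lyndonI => // p y E np ny; exfalso.
have := congr1 size E; rewrite size_cat /= => /eqP; move: np ny.
by rewrite -!size_eq0; case: (size p) => // k; case: (size y) => // m; rewrite addSn addnS.
Qed.

Lemma base_inv n (w O E : word) : in_We n w -> omega_init w O E -> Inv O E.
Proof.
case=> _ [fs0 [F0 _ cnt]] [fs [F H]].
rewrite -(lf_unique F0 F) in H; clear fs F.
case: F0 => Ew Lw Sw.
case: ifP H => ow.
  case=> f1 [f2 [a [Efs EO EE]]].
  rewrite Efs count_cat /= in cnt.
  have c1 : count (fun f => odd (size f)) f1 = 0 by lia.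
  have c2 : count (fun f => odd (size f)) f2 = 0 by lia.
  have ev : forall s : seq word, count (fun f => odd (size f)) s = 0 ->
      all (fun e => ~~ odd (size e)) s.
    by elim=> //= x s IH; case: (odd (size x)) => //= /IH.
  have FON : is_lyndon_fact O [:: [:: a]].
    by split=> //=; rewrite ?EO ?cats0 ?lyndon1.
  apply: (goodI FON (esN := f1 ++ f2)) => //.
  - split=> //; first by move: Lw; rewrite Efs !all_cat; case/andP=> -> ; case/andP=> _ ->.
    move: Sw; rewrite Efs; apply: (subseq_sorted geR_trans).
    by apply: cat_subseq; [exact: subseq_refl | exact: subseq_cons].
  - by rewrite all_cat !ev.
  - move=> pre om r s Eo so2 _; rewrite -[ [:: [:: a]] ]/(rcons [::] [:: a]) in Eo.
    by rewrite -(rcons_last_eq Eo) in so2.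
case=> EO EE.
have FON : is_lyndon_fact O [::] by split=> //; rewrite EO.
apply: (goodI FON (esN := fs0)) => //.
- by rewrite EE.
- move: ow; rewrite -Ew odd_flatten_count => ow.
  have c0 : count (fun f => odd (size f)) fs0 = 0.
    by move: cnt ow; case: (count _ _) => [|[|k]].
  by move: c0; elim: (fs0) => //= x s IH; case: (odd (size x)) => //= /IH.
- by move=> pre om r s Eo; case: pre Eo.
Qed.

Lemma reach_inv n (w O E : word) : in_We n w -> omega_reach w O E -> Inv O E.
Proof.
move=> HW; elim=> [O0 E0 Hi|O' E' O0 E0 _ IH _ [os' [es' [FO FE Hs]]]].
  exact: base_inv HW Hi.
by case: (step_all IH FO FE Hs).
Qed.

End Main.

Theorem lemma4p23 (d : Order.disp_t) (A : finOrderType d) (n : nat)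
    (w' O' E' O E : seq A) (os' es' : seq (seq A)) :
  in_We n w' -> omega_reach w' O' E' -> E' != [::] ->
  is_lyndon_fact O' os' -> is_lyndon_fact E' es' ->
  stepS os' es' O E \/ (exists r ss, stepP os' es' r ss O E)
                    \/ (exists r ss, stepF os' es' r ss O E) ->
  [/\ (* (i) *)
      (forall es, is_lyndon_fact E es -> all (fun e => ~~ odd (size e)) es),
      (* (ii) first part, (iii), (iv) *)
      (forall os, is_lyndon_fact O os ->
         [/\ all (fun o => odd (size o)) os, uniq os,
             ltw (Some E) (fact_at os (size os).-1) &
             forall pre om r s es e1 rest, os = rcons pre om -> 2 <= size om ->
               std_fact om r s -> is_lyndon_fact E es -> es = e1 :: rest ->
               lexle e1 s]),
      (* (ii) and (v) after a step of type (S') *)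
      (stepS os' es' O E ->
         is_lyndon_fact O (rcons (dropl os') (last [::] os' ++ head [::] es')) /\
         std_fact (last [::] os' ++ head [::] es') (last [::] os') (head [::] es')),
      (* (ii) and (vi) after a step of type (P') *)
      (forall r ss, stepP os' es' r ss O E ->
         is_lyndon_fact O (rcons (dropl os') (r ++ head [::] ss ++ last [::] os')) /\
         std_fact (r ++ head [::] ss ++ last [::] os') (r ++ head [::] ss) (last [::] os')) &
      (* (ii) after a step of type (F') *)
      (forall r ss, stepF os' es' r ss O E ->
         is_lyndon_fact O (os' ++ [:: head [::] ss; r]))].
Proof.
move=> HW HR _ FO FE Hs.
have I := reach_inv HW HR.
case: (step_all I FO FE Hs) => [[IE IO] HS HP HF].
split=> // os Fos; exact: IO.
Qed.
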